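(* Let $M:\mathbb M\to\mathbb{P}\mathrm{b}$ be a cartesian multicategory (in the sense recalled in the context). Then the following are equivalent: (AP) for every object $X$ of $\mathbb M$ and every map of finite sets $f:M_0X\to J$, there exists an algebraic product for $X$ along $f$; (UP) for every object $X$ of $\mathbb M$ and every map of finite sets $f:M_0X\to J$, there exists a universal product for $X$ along $f$; (R) $M$ is representable, i.e. the functor $M_l:\mathbb M_l\to\mathrm{Set}_f$ is an opfibration whose opcartesian arrows are stable under reindexing: whenever $u$ is an opcartesian loose arrow and $c$ is a cell of $\mathbb M$ whose right loose side is $u$, the left loose side of $c$ is again opcartesian.
   Context: All double categories and double functors are strict. A double category $\mathbb A$ consists of a category $\mathbb A_0$ (objects and tight arrows), a category $\mathbb A_1$ whose objects are the loose arrows and whose morphisms are the cells, source and target functors $s,t:\mathbb A_1\to\mathbb A_0$, and a strictly associative and unital composition of loose arrows and cells; $\mathbb A_l$ denotes the category of objects and loose arrows. A cell has a left loose side (its domain in $\mathbb A_1$), a right loose side (its codomain in $\mathbb A_1$), and top and bottom tight sides. $\mathrm{Set}_f$ is the category of finite sets. $\mathbb{P}\mathrm{b}$ is the double category whose objects are finite sets, whose tight and loose arrows are maps of finite sets, and whose cells are pullback squares: a cell with left side $f:I\to J$, right side $g:L\to K$, top $k:I\to L$, bottom $l:J\to K$ is a pullback square $gk=lf$; loose composition is composition of maps. So $\mathbb{P}\mathrm{b}_0=\mathrm{Set}_f$ and $\mathbb{P}\mathrm{b}_l=\mathrm{Set}_f$. A symmetric multicategory is a double category $\mathbb M$ such that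 $\mathbb M_0$ and $\mathbb M_1$ have finite sums preserved by $s$ and $t$, together with a double functor $M:\mathbb M\to\mathbb{P}\mathrm{b}$ whose components $M_0:\mathbb M_0\to\mathrm{Set}_f$ and $M_1:\mathbb M_1\to\mathbb{P}\mathrm{b}_1$ preserve finite sums and are discrete fibrations; $M_l:\mathbb M_l\to\mathrm{Set}_f$ is its loose part. Consequently: for an object $Y$ and a map $f:I\to M_0Y$ there is a unique tight arrow $\tilde f:f^*Y\to Y$ over $f$; and for a loose arrow $\beta$ and a pullback square in $\mathrm{Set}_f$ with right side $M_l\beta$ there is a unique cell of $\mathbb M$ over it with right side $\beta$. Cartesian multicategory (covariant reindexing form, which the paper gives as equivalent to being an algebra for its monad $(-)^{\mathrm{cart}}$): a symmetric multicategory $M$ together with an assignment, to each loose $\alpha:X\to Z$, tight $f:X\to Y$ and map $h:M_0Y\to M_0Z$ with $h\circ M_0f=M_l\alpha$, of a loose arrow $f^h_!\alpha:Y\to Z$ with $M_l(f^h_!\alpha)=h$, such that: (U) $(\mathrm{id}_X)^{M_l\alpha}_!\alpha=\alpha$; (Functoriality) for tight $g:X\to Y$, $f:Y\to W$ and maps $h':M_0Y\to M_0Z$, $h:M_0W\to M_0Z$ with $h'\circ M_0g=M_l\alpha$ and $h\circ M_0f=h'$: $f^h_!(g^{h'}_!\alpha)=(fg)^h_!\alpha$; (Frobenius) for a cell with left side $\gamma:W\to V$, right side $\alpha:X\to Y$, top $k:W\to X$, bottom $g:V\to Y$, a loose $\beta:V\to Z$ and a map $m:M_0Y\to M_0Z$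 with $m\circ M_0g=M_l\beta$: $k^{m\circ M_l\alpha}_!(\beta\circ\gamma)=(g^m_!\beta)\circ\alpha$; (Tailing) for loose $\alpha:U\to Y$, tight $f:U\to X$, a map $m:M_0X\to M_0Y$ with $m\circ M_0f=M_l\alpha$ and loose $\beta:Y\to Z$: $f^{M_l\beta\circ m}_!(\beta\circ\alpha)=\beta\circ(f^m_!\alpha)$; (Beck–Chevalley) let $\delta=f^h_!\alpha$ with $\alpha:X\to Z$, $f:X\to Y$; let $c_1$ be a cell with right side $\alpha$, bottom a tight $g:Z'\to Z$, left side $\alpha':X'\to Z'$, top $x:X'\to X$, and $c_2$ a cell with right side $\delta$, bottom $g$, left side $\delta':Y'\to Z'$, top $y:Y'\to Y$; if $f':X'\to Y'$ is tight with $y f'=f x$ and $M_l\delta'\circ M_0f'=M_l\alpha'$, then $\delta'=f'^{M_l\delta'}_!\alpha'$. Universal product of $X$ (with $I=M_0X$) along $f:I\to J$: an object $P$ over $J$ and a loose arrow $\pi:f^*P\to X$ with $M_l\pi=\mathrm{id}_I$, such that for every pullback square $h\circ f'=f\circ h'$ in $\mathrm{Set}_f$ (with $f':L\to K$, $h':L\to I$, $h:K\to J$), every object $Q$ over $K$ and every loose $\rho:f'^*Q\to X$ over $h'$, there is a unique cell of $\mathbb M$ with top $\tilde f':f'^*Q\to Q$, bottom $\tilde f:f^*P\to P$, right side some $t:Q\to P$ (over $h$) and left side some $t':f'^*Q\to f^*P$, such that $\rho=\pi\circ t'$. Algebraic product of $X$ along $f:I\to J$: an object $P$ over $J$, a loose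 $\pi:f^*P\to X$ over $\mathrm{id}_I$ and a loose $u:X\to P$ over $f$ such that (i) $\tilde f^{\,\mathrm{id}_J}_!(u\circ\pi)=\mathrm{id}_P$; and (ii) letting $l,h:K\to I$ be the projections of the pullback of $f$ along itself, $f^*u:h^*X\to f^*P$ the left side of the unique cell with right side $u$, top $\tilde h:h^*X\to X$ and bottom $\tilde f$, and $\Delta:X\to h^*X$ the tight arrow over the diagonal $I\to K$ (so $\tilde h\Delta=\mathrm{id}_X$), one has $\Delta^{\,l}_!(\mathrm{id}_X)=\pi\circ(f^*u)$. *)

(* Defs.v *)
From Stdlib Require Import FunctionalExtensionality.
From mathcomp Require Import all_boot.

Set Implicit Arguments.
Unset Strict Implicit.
Unset Printing Implicit Defensive.

(* Finite sets.  Set_f is modelled by its standard skeleton: the object n    *)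
(* is the finite set 'I_n = {0,...,n-1}, a map m -> n is a function          *)
(* 'I_m -> 'I_n, composition is function composition.                       *)

Definition castf (a b m n : nat) (eA : a = m) (eB : b = n)
  (f : 'I_m -> 'I_n) : 'I_a -> 'I_b :=
  fun i => cast_ord (esym eB) (f (cast_ord eA i)).

(* pullback square in Set_f : left side f : I -> J, right side g : L -> K,
   top k : I -> L, bottom l : J -> K; commutes (g k = l f) and is universal. *)
Definition isPullback (I J L K : nat) (f : 'I_I -> 'I_J) (g : 'I_L -> 'I_K)
  (k : 'I_I -> 'I_L) (l : 'I_J -> 'I_K) : Prop :=
  g \o k = l \o f /\
  forall (P : nat) (p1 : 'I_P -> 'I_J) (p2 : 'I_P -> 'I_L),
    l \o p1 = g \o p2 ->
    exists! u : 'I_P -> 'I_I, f \o u = p1 /\ k \o u = p2.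

Lemma pb_paste (I J L K L2 K2 : nat) (f : 'I_I -> 'I_J) (g : 'I_L -> 'I_K)
  (h : 'I_L2 -> 'I_K2) (k : 'I_I -> 'I_L) (l : 'I_J -> 'I_K)
  (k' : 'I_L -> 'I_L2) (l' : 'I_K -> 'I_K2) :
  isPullback f g k l -> isPullback g h k' l' ->
  isPullback f h (k' \o k) (l' \o l).
Proof.
move=> [c1 u1] [c2 u2]; split.
  apply: functional_extensionality => x /=.
  have e1 := congr1 (fun F => F x) c1.
  have e2 := congr1 (fun F => F (k x)) c2.
  simpl in e1, e2; by rewrite e2 e1.
move=> P p1 p2 H.
have [v [[hv1 hv2] uv]] := u2 P (l \o p1) p2 H.
have [w [[hw1 hw2] uw]] := u1 P p1 v (esym hv1).
exists w; split.
  split => //; apply: functional_extensionality => x /=.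
  have e1 := congr1 (fun F => F x) hw2.
  have e2 := congr1 (fun F => F x) hv2.
  simpl in e1, e2; by rewrite e1 e2.
move=> w' [h1 h2]; apply: uw; split => //.
have -> // : v = k \o w'.
apply: uv; split => //.
apply: functional_extensionality => x /=.
have e1 := congr1 (fun F => F (w' x)) c1.
have e2 := congr1 (fun F => F x) h1.
simpl in e1, e2; by rewrite e1 e2.
Qed.

Section Sums.
Variables (O : Type) (H : O -> O -> Type)
  (comp : forall a b c : O, H b c -> H a b -> H a c).

Definition is_initial (z : O) : Prop :=
  forall x : O, exists! h : H z x, True.

Definition is_coproduct (a b s : O) (i1 : H a s) (i2 : H b s) : Prop :=
  forall (x : O) (f : H a x) (g : H b x),
    exists! h : H s x, comp h i1 = f /\ comp h i2 = g.

Definition has_finite_sums : Prop :=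
  (exists z, is_initial z) /\
  (forall a b : O, exists (s : O) (i1 : H a s) (i2 : H b s),
      is_coproduct i1 i2).
End Sums.

Definition preserves_finite_sums (O : Type) (H : O -> O -> Type)
  (comp : forall a b c : O, H b c -> H a b -> H a c)
  (O' : Type) (H' : O' -> O' -> Type)
  (comp' : forall a b c : O', H' b c -> H' a b -> H' a c)
  (F : O -> O') (Fh : forall a b : O, H a b -> H' (F a) (F b)) : Prop :=
  (forall z, is_initial H z -> is_initial H' (F z)) /\
  (forall (a b s : O) (i1 : H a s) (i2 : H b s),
      is_coproduct comp i1 i2 -> is_coproduct comp' (Fh _ _ i1) (Fh _ _ i2)).

Arguments preserves_finite_sums {O H} comp {O' H'} comp' F Fh.

Definition homSet (m n : nat) : Type := 'I_m -> 'I_n.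
Definition compSet (a b c : nat) (g : homSet b c) (f : homSet a b) : homSet a c :=
  g \o f.

(* The category Pb_1: objects are maps of finite sets, morphisms are
   pullback squares (left side = source, right side = target). *)
Record FM := MkFM { fd : nat; fc : nat; fmap : 'I_fd -> 'I_fc }.
Arguments fmap : clear implicits.

Definition homPb (x y : FM) : Type :=
  {k : 'I_(fd x) -> 'I_(fd y) &
   {l : 'I_(fc x) -> 'I_(fc y) | isPullback (fmap x) (fmap y) k l}}.

Definition compPb (x y z : FM) (b : homPb y z) (a : homPb x y) : homPb x z :=
  existT _ (projT1 b \o projT1 a)
    (exist _ (proj1_sig (projT2 b) \o proj1_sig (projT2 a))
       (pb_paste (proj2_sig (projT2 a)) (proj2_sig (projT2 b)))).

(* cell f g k l : left loose side f : A -> B, right loose side g : C -> D,   *)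
(* top tight side k : A -> C, bottom tight side l : B -> D.                  *)
(* ccomp  = composition in the category A_1 (tight direction);              *)
(* clcomp = loose composition of cells.                                      *)
Record DblCatData := {
  ob : Type;
  th : ob -> ob -> Type;
  tid : forall A, th A A;
  tcomp : forall A B C, th B C -> th A B -> th A C;
  lo : ob -> ob -> Type;
  lid : forall A, lo A A;
  lcomp : forall A B C, lo B C -> lo A B -> lo A C;
  cell : forall A B C D, lo A B -> lo C D -> th A C -> th B D -> Type;
  cid : forall A B (f : lo A B), cell f f (tid A) (tid B);
  ccomp : forall A B C D E F (f : lo A B) (g : lo C D) (h : lo E F)
            (k : th A C) (l : th B D) (k' : th C E) (l' : th D F),
     cell g h k' l' -> cell f g k l -> cell f h (tcomp k' k) (tcomp l' l);
  clid : forall A C (k : th A C), cell (lid A) (lid C) k k;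
  clcomp : forall A B E C D F (f : lo A B) (f' : lo B E) (g : lo C D)
             (g' : lo D F) (k : th A C) (l : th B D) (m : th E F),
     cell f' g' l m -> cell f g k l -> cell (lcomp f' f) (lcomp g' g) k m
}.

Arguments th {d}.
Arguments tid {d}.
Arguments tcomp {d A B C}.
Arguments lo {d}.
Arguments lid {d}.
Arguments lcomp {d A B C}.
Arguments cell {d A B C D}.
Arguments cid {d A B}.
Arguments ccomp {d A B C D E F f g h k l k' l'}.
Arguments clid {d A C}.
Arguments clcomp {d A B E C D F f f' g g' k l m}.

Record square (D : DblCatData) := Sq {
  sqA : ob D; sqB : ob D; sqC : ob D; sqD : ob D;
  sqf : lo sqA sqB; sqg : lo sqC sqD; sqk : th sqA sqC; sql : th sqB sqD;
  sqc : cell sqf sqg sqk sql }.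
Arguments Sq {D sqA sqB sqC sqD sqf sqg sqk sql}.

Record DblCatLaws (D : DblCatData) : Prop := {
  tcompA : forall (A B C E : ob D) (f : th A B) (g : th B C) (h : th C E),
    tcomp h (tcomp g f) = tcomp (tcomp h g) f;
  tcomp1l : forall (A B : ob D) (f : th A B), tcomp (tid B) f = f;
  tcomp1r : forall (A B : ob D) (f : th A B), tcomp f (tid A) = f;
  lcompA : forall (A B C E : ob D) (f : lo A B) (g : lo B C) (h : lo C E),
    lcomp h (lcomp g f) = lcomp (lcomp h g) f;
  lcomp1l : forall (A B : ob D) (f : lo A B), lcomp (lid B) f = f;
  lcomp1r : forall (A B : ob D) (f : lo A B), lcomp f (lid A) = f;
  ccompA : forall (A B C1 D1 C2 D2 C3 D3 : ob D) (f : lo A B) (g : lo C1 D1)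
      (h : lo C2 D2) (i : lo C3 D3) k l k' l' k'' l''
      (c : cell f g k l) (d : cell g h k' l') (e : cell h i k'' l''),
    Sq (ccomp e (ccomp d c)) = Sq (ccomp (ccomp e d) c);
  ccomp1l : forall (A B C E : ob D) (f : lo A B) (g : lo C E) k l
      (c : cell f g k l), Sq (ccomp (cid g) c) = Sq c;
  ccomp1r : forall (A B C E : ob D) (f : lo A B) (g : lo C E) k l
      (c : cell f g k l), Sq (ccomp c (cid f)) = Sq c;
  clcompA : forall (A1 A2 A3 A4 B1 B2 B3 B4 : ob D)
      (f1 : lo A1 A2) (f2 : lo A2 A3) (f3 : lo A3 A4)
      (g1 : lo B1 B2) (g2 : lo B2 B3) (g3 : lo B3 B4)
      (k1 : th A1 B1) (k2 : th A2 B2) (k3 : th A3 B3) (k4 : th A4 B4)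
      (c : cell f1 g1 k1 k2) (d : cell f2 g2 k2 k3) (e : cell f3 g3 k3 k4),
    Sq (clcomp e (clcomp d c)) = Sq (clcomp (clcomp e d) c);
  clcomp1l : forall (A B C E : ob D) (f : lo A B) (g : lo C E) k l
      (c : cell f g k l), Sq (clcomp (clid l) c) = Sq c;
  clcomp1r : forall (A B C E : ob D) (f : lo A B) (g : lo C E) k l
      (c : cell f g k l), Sq (clcomp c (clid k)) = Sq c;
  interchange : forall (A B E C0 D0 F C' D' F' : ob D)
      (f : lo A B) (f2 : lo B E) (g : lo C0 D0) (g2 : lo D0 F)
      (h : lo C' D') (h2 : lo D' F')
      (k : th A C0) (l : th B D0) (m : th E F)
      (k' : th C0 C') (l' : th D0 D') (m' : th F F')
      (c : cell f g k l) (c' : cell g h k' l')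
      (d : cell f2 g2 l m) (d' : cell g2 h2 l' m'),
    clcomp (ccomp d' d) (ccomp c' c) = ccomp (clcomp d' c') (clcomp d c);
  clcomp_cid : forall (A B E : ob D) (f : lo A B) (f' : lo B E),
    clcomp (cid f') (cid f) = cid (lcomp f' f);
  ccomp_clid : forall (A C E : ob D) (k : th A C) (k' : th C E),
    ccomp (clid k') (clid k) = clid (tcomp k' k);
  clid_tid : forall A : ob D, clid (tid A) = cid (lid A)
}.

(* The category A_1: objects are loose arrows, morphisms are cells. *)
Record LA (D : DblCatData) := MkLA { lsrc : ob D; ltgt : ob D; larr : lo lsrc ltgt }.
Arguments MkLA {D lsrc ltgt}.
Arguments lsrc {D}.
Arguments ltgt {D}.
Arguments larr {D}.

Definition hom1 (D : DblCatData) (x y : LA D) : Type :=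
  {k : th (lsrc x) (lsrc y) & {l : th (ltgt x) (ltgt y) &
     cell (larr x) (larr y) k l}}.

Definition comp1 (D : DblCatData) (x y z : LA D) (b : hom1 y z) (a : hom1 x y)
  : hom1 x z :=
  existT _ (tcomp (projT1 b) (projT1 a))
    (existT _ (tcomp (projT1 (projT2 b)) (projT1 (projT2 a)))
       (ccomp (projT2 (projT2 b)) (projT2 (projT2 a)))).

(* Symmetric multicategories: the data of a double functor M : A -> Pb.      *)
Record MultiData (D : DblCatData) := {
  M0o : ob D -> nat;
  M0a : forall A B : ob D, th A B -> 'I_(M0o A) -> 'I_(M0o B);
  Ml : forall A B : ob D, lo A B -> 'I_(M0o A) -> 'I_(M0o B)
}.
Arguments M0o {D}.
Arguments M0a {D} m {A B}.
Arguments Ml {D} m {A B}.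

Section Multi.
Variables (D : DblCatData) (M : MultiData D).

Definition toFM (x : LA D) : FM := MkFM (Ml M (larr x)).

Definition M1hom
  (hc : forall (A B C E : ob D) (f : lo A B) (g : lo C E) k l (c : cell f g k l),
        isPullback (Ml M f) (Ml M g) (M0a M k) (M0a M l))
  (x y : LA D) (p : hom1 x y) : homPb (toFM x) (toFM y) :=
  existT _ (M0a M (projT1 p))
    (exist _ (M0a M (projT1 (projT2 p))) (hc _ _ _ _ _ _ _ _ (projT2 (projT2 p)))).

Record IsSymMulti : Prop := {
  m0_id : forall A : ob D, M0a M (tid A) = id;
  m0_comp : forall (A B C : ob D) (g : th B C) (f : th A B),
    M0a M (tcomp g f) = M0a M g \o M0a M f;
  ml_id : forall A : ob D, Ml M (lid A) = id;
  ml_comp : forall (A B C : ob D) (g : lo B C) (f : lo A B),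
    Ml M (lcomp g f) = Ml M g \o Ml M f;
  m_cell : forall (A B C E : ob D) (f : lo A B) (g : lo C E) k l
      (c : cell f g k l), isPullback (Ml M f) (Ml M g) (M0a M k) (M0a M l);
  (* M_0 : A_0 -> Set_f is a discrete fibration *)
  m0_dfib : forall (Y : ob D) (n : nat) (f : 'I_n -> 'I_(M0o M Y)),
    exists! p : {X : ob D & th X Y},
      exists e : M0o M (projT1 p) = n,
        M0a M (projT2 p) = castf e (erefl (M0o M Y)) f;
  (* M_1 : A_1 -> Pb_1 is a discrete fibration *)
  m1_dfib : forall (C E : ob D) (b : lo C E) (m n : nat) (f : 'I_m -> 'I_n)
      (k : 'I_m -> 'I_(M0o M C)) (l : 'I_n -> 'I_(M0o M E)),
    isPullback f (Ml M b) k l ->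
    exists! p : {x : LA D & hom1 x (MkLA b)},
      exists (e1 : M0o M (lsrc (projT1 p)) = m)
             (e2 : M0o M (ltgt (projT1 p)) = n),
        [/\ Ml M (larr (projT1 p)) = castf e1 e2 f,
            M0a M (projT1 (projT2 p)) = castf e1 (erefl _) k &
            M0a M (projT1 (projT2 (projT2 p))) = castf e2 (erefl _) l];
  a0_sums : has_finite_sums (@tcomp D);
  a1_sums : has_finite_sums (@comp1 D);
  s_pres : preserves_finite_sums (@comp1 D) (@tcomp D) (@lsrc D)
             (fun x y p => projT1 p);
  t_pres : preserves_finite_sums (@comp1 D) (@tcomp D) (@ltgt D)
             (fun x y p => projT1 (projT2 p));
  m0_pres : preserves_finite_sums (@tcomp D) compSet (M0o M) (@M0a D M);
  m1_pres : preserves_finite_sums (@comp1 D) compPb toFM (M1hom m_cell)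
}.

(* Cartesian structure (covariant reindexing form).                          *)
(* push a f h H  is  f^h_! a.                                                *)
Record CartData := {
  push : forall (X Y Z : ob D) (a : lo X Z) (f : th X Y)
           (h : 'I_(M0o M Y) -> 'I_(M0o M Z)),
         h \o M0a M f = Ml M a -> lo Y Z
}.

Record IsCartesian (C : CartData) : Prop := {
  push_over : forall X Y Z (a : lo X Z) (f : th X Y) h (H : h \o M0a M f = Ml M a),
    Ml M (push C H) = h;
  cart_U : forall X Z (a : lo X Z) (H : Ml M a \o M0a M (tid X) = Ml M a),
    push C H = a;
  cart_funct : forall X Y W Z (a : lo X Z) (g : th X Y) (f : th Y W)
      (h' : 'I_(M0o M Y) -> 'I_(M0o M Z)) (h : 'I_(M0o M W) -> 'I_(M0o M Z))
      (H1 : h' \o M0a M g = Ml M a), h \o M0a M f = h' ->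
    forall (H3 : h \o M0a M f = Ml M (push C H1))
           (H4 : h \o M0a M (tcomp f g) = Ml M a),
      push C H3 = push C H4;
  cart_frob : forall W V X Y Z (gam : lo W V) (a : lo X Y) (k : th W X) (g : th V Y)
      (c : cell gam a k g) (b : lo V Z) (m : 'I_(M0o M Y) -> 'I_(M0o M Z))
      (Hm : m \o M0a M g = Ml M b)
      (H1 : (m \o Ml M a) \o M0a M k = Ml M (lcomp b gam)),
    push C H1 = lcomp (push C Hm) a;
  cart_tail : forall U X Y Z (a : lo U Y) (f : th U X)
      (m : 'I_(M0o M X) -> 'I_(M0o M Y)) (Hm : m \o M0a M f = Ml M a)
      (b : lo Y Z) (H1 : (Ml M b \o m) \o M0a M f = Ml M (lcomp b a)),
    push C H1 = lcomp b (push C Hm);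
  cart_BC : forall X Y Z (a : lo X Z) (f : th X Y)
      (h : 'I_(M0o M Y) -> 'I_(M0o M Z)) (Hh : h \o M0a M f = Ml M a)
      X' Y' Z' (a' : lo X' Z') (x : th X' X) (g : th Z' Z)
      (c1 : cell a' a x g)
      (d' : lo Y' Z') (y : th Y' Y) (c2 : cell d' (push C Hh) y g)
      (f' : th X' Y'), tcomp y f' = tcomp f x ->
    forall H : Ml M d' \o M0a M f' = Ml M a',
      d' = push C H
}.

(* Universal products.  P is over J (eP), Q = f^*P (eQ : M0 Q = I = M0 X),   *)
(* ft : f^*P -> P is the tight arrow over f, pi : f^*P -> X over id_I.       *)
Definition univ_product (X : ob D) (J : nat) (f : 'I_(M0o M X) -> 'I_J)
  (P Q : ob D) (eP : M0o M P = J) (eQ : M0o M Q = M0o M X)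
  (ft : th Q P) (pi : lo Q X) : Prop :=
  [/\ M0a M ft = castf eQ eP f,
      Ml M pi = castf eQ (erefl (M0o M X)) id &
      forall (L K : nat) (f' : 'I_L -> 'I_K) (h' : 'I_L -> 'I_(M0o M X))
             (h : 'I_K -> 'I_J),
        isPullback f' f h' h ->
        forall (Q' R : ob D) (eR : M0o M R = L) (eQ' : M0o M Q' = K)
               (u : th R Q'),
          M0a M u = castf eR eQ' f' ->
          forall rho : lo R X, Ml M rho = castf eR (erefl (M0o M X)) h' ->
          exists! p : {t' : lo R Q & {t : lo Q' P & cell t' t u ft}},
            Ml M (projT1 (projT2 p)) = castf eQ' eP h /\
            rho = lcomp pi (projT1 p)].

Definition UP : Prop :=
  forall (X : ob D) (J : nat) (f : 'I_(M0o M X) -> 'I_J),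
    exists (P Q : ob D) (eP : M0o M P = J) (eQ : M0o M Q = M0o M X)
           (ft : th Q P) (pi : lo Q X),
      univ_product f eP eQ ft pi.

Definition alg_product (C : CartData) (X : ob D) (J : nat)
  (f : 'I_(M0o M X) -> 'I_J)
  (P Q : ob D) (eP : M0o M P = J) (eQ : M0o M Q = M0o M X)
  (ft : th Q P) (pi : lo Q X) (u : lo X P) : Prop :=
  [/\ M0a M ft = castf eQ eP f,
      Ml M pi = castf eQ (erefl (M0o M X)) id,
      Ml M u = castf (erefl (M0o M X)) eP f,
      (forall H : id \o M0a M ft = Ml M (lcomp u pi),
         push C H = lid P) &
      (* (ii): for the pullback (K, l, h) of f along itself, the reindexing
         h^*X (R, ht), the cell fu := f^*u over the pullback square, and the
         tight arrow Delta over the diagonal d *)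
      (forall (K : nat) (l h : 'I_K -> 'I_(M0o M X)),
         isPullback l f h f ->
         forall (R : ob D) (eR : M0o M R = K) (ht : th R X),
           M0a M ht = castf eR (erefl (M0o M X)) h ->
           forall (fu : lo R Q) (c : cell fu u ht ft),
             Ml M fu = castf eR eQ l ->
             forall d : 'I_(M0o M X) -> 'I_K, l \o d = id -> h \o d = id ->
             forall Delta : th X R,
               M0a M Delta = castf (erefl (M0o M X)) eR d ->
               forall H : castf eR (erefl (M0o M X)) l \o M0a M Delta
                          = Ml M (lid X),
                 push C H = lcomp pi fu)].

Definition AP (C : CartData) : Prop :=
  forall (X : ob D) (J : nat) (f : 'I_(M0o M X) -> 'I_J),
    exists (P Q : ob D) (eP : M0o M P = J) (eQ : M0o M Q = M0o M X)
           (ft : th Q P) (pi : lo Q X) (u : lo X P),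
      alg_product C f eP eQ ft pi u.

Definition opcartesian (X Y : ob D) (u : lo X Y) : Prop :=
  forall (Z : ob D) (w : lo X Z) (g : 'I_(M0o M Y) -> 'I_(M0o M Z)),
    g \o Ml M u = Ml M w ->
    exists! v : lo Y Z, Ml M v = g /\ lcomp v u = w.

Definition is_opfibration : Prop :=
  forall (X : ob D) (n : nat) (f : 'I_(M0o M X) -> 'I_n),
    exists (Y : ob D) (u : lo X Y) (e : M0o M Y = n),
      Ml M u = castf (erefl (M0o M X)) e f /\ opcartesian u.

Definition representable : Prop :=
  is_opfibration /\
  forall (A B C E : ob D) (f : lo A B) (u : lo C E) (k : th A C) (l : th B E)
         (c : cell f u k l),
    opcartesian u -> opcartesian f.

End Multi.

(* Main.v *)
Require Import Defs.
From Stdlib Require Import FunctionalExtensionality.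
From mathcomp Require Import all_boot.
From Stdlib Require Import ProofIrrelevance Eqdep.

Set Implicit Arguments.
Unset Strict Implicit.
Unset Printing Implicit Defensive.

Lemma fext (A B : Type) (f g : A -> B) : (forall x, f x = g x) -> f = g.
Proof. exact: functional_extensionality. Qed.

Lemma eqapp (A B : Type) (f g : A -> B) : f = g -> forall x, f x = g x.
Proof. by move=> ->. Qed.

Ltac papp E x := let h := fresh "h" in have h := eqapp E x; simpl in h; rewrite h; clear h.
Ltac pappr E x := let h := fresh "h" in have h := eqapp E x; simpl in h; rewrite -h; clear h.

Lemma sig_inj (U : Type) (P : U -> Type) (p : U) (x y : P p) :
  existT P p x = existT P p y -> x = y.
Proof. exact: inj_pairT2. Qed.

Lemma castf_id m n (f : 'I_m -> 'I_n) : castf erefl erefl f = f.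
Proof. by apply: fext => i; rewrite /castf !cast_ord_id. Qed.

Lemma castfE a b m n (eA : a = m) (eB : b = n) (f : 'I_m -> 'I_n) i :
  val (castf eA eB f i) = val (f (cast_ord eA i)).
Proof. by []. Qed.

Section SetPB.

Lemma pb_comm I J L K (f : 'I_I -> 'I_J) (g : 'I_L -> 'I_K) k l :
  isPullback f g k l -> g \o k = l \o f.
Proof. by case. Qed.

Lemma pb_ex I J L K (f : 'I_I -> 'I_J) (g : 'I_L -> 'I_K) k l :
  isPullback f g k l -> forall P (p1 : 'I_P -> 'I_J) (p2 : 'I_P -> 'I_L),
  l \o p1 = g \o p2 -> exists u : 'I_P -> 'I_I, f \o u = p1 /\ k \o u = p2.
Proof. by case=> _ H P p1 p2 E; have [u [Hu _]] := H P p1 p2 E; exists u. Qed.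

Lemma pb_uniq I J L K (f : 'I_I -> 'I_J) (g : 'I_L -> 'I_K) k l :
  isPullback f g k l -> forall P (u v : 'I_P -> 'I_I),
  f \o u = f \o v -> k \o u = k \o v -> u = v.
Proof.
case=> Hc H P u v E1 E2.
have E : l \o (f \o u) = g \o (k \o u).
  by apply: fext => x /=; have := eqapp Hc (u x).
have [w [_ Hw]] := H P _ _ E.
by rewrite -(Hw u (conj erefl erefl)) (Hw v (conj (esym E1) (esym E2))).
Qed.

Lemma pb_transpose I J L K (f : 'I_I -> 'I_J) (g : 'I_L -> 'I_K) k l :
  isPullback f g k l -> isPullback k l f g.
Proof.
case=> Hc H; split; first by rewrite Hc.
move=> P p1 p2 E; have [w [[H1 H2] Hw]] := H P p2 p1 (esym E).
by exists w; split=> // w' [? ?]; apply: Hw.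
Qed.

Lemma pb_bij I J L K (f : 'I_I -> 'I_J) (g : 'I_L -> 'I_K) k l
  (f' : 'I_J -> 'I_I) (g' : 'I_K -> 'I_L) :
  cancel f f' -> cancel f' f -> cancel g g' ->
  g \o k = l \o f -> isPullback f g k l.
Proof.
move=> ff' f'f gg' Hc; split=> // P p1 p2 E.
exists (f' \o p1); split.
  split; first by apply: fext => x /=; rewrite f'f.
  apply: fext => x /=.
  rewrite -[k _]gg' -[p2 x]gg'; congr g'.
  have := eqapp Hc (f' (p1 x)); rewrite /= f'f => ->.
  exact: (eqapp E x).
move=> w [H1 _]; apply: fext => x /=.
by rewrite -H1 /= ff'.
Qed.

Lemma pb_adj I J J' L K (f : 'I_I -> 'I_J) (g : 'I_L -> 'I_K) k
  (l : 'I_J' -> 'I_K) (b : 'I_J -> 'I_J') (b' : 'I_J' -> 'I_J) :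
  cancel b b' -> cancel b' b ->
  isPullback f g k (l \o b) -> isPullback (b \o f) g k l.
Proof.
move=> bb' b'b [Hc H]; split.
  by rewrite Hc.
move=> P p1 p2 E.
have E' : (l \o b) \o (b' \o p1) = g \o p2.
  by apply: fext => x /=; rewrite b'b; exact: (eqapp E x).
have [w [[H1 H2] Hw]] := H P _ _ E'.
exists w; split.
  split=> //; apply: fext => x /=; have := eqapp H1 x; rewrite /= => ->; by rewrite b'b.
move=> w' [H1' H2']; apply: Hw; split=> //.
by apply: fext => x /=; rewrite -(eqapp H1' x) /= bb'.
Qed.

Lemma pb_postinj I J L K K' (f : 'I_I -> 'I_J) (g : 'I_L -> 'I_K) k l
  (b : 'I_K -> 'I_K') :
  injective b -> isPullback f (b \o g) k (b \o l) -> isPullback f g k l.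
Proof.
move=> ib [Hc H]; split.
  by apply: fext => x; apply: ib; exact: (eqapp Hc x).
move=> P p1 p2 E.
have E' : (b \o l) \o p1 = (b \o g) \o p2 by apply: fext => x /=; have := eqapp E x => /= ->.
exact: H P p1 p2 E'.
Qed.

Lemma pb_cancel A B C E C' E' (F : 'I_A -> 'I_B) (G : 'I_C -> 'I_E)
  (H : 'I_C' -> 'I_E') (s : 'I_A -> 'I_C) (t : 'I_B -> 'I_E)
  (s' : 'I_C -> 'I_C') (t' : 'I_E -> 'I_E') :
  G \o s = t \o F -> isPullback G H s' t' ->
  isPullback F H (s' \o s) (t' \o t) -> isPullback F G s t.
Proof.
move=> Hc HR [Hco HO]; split=> // P p1 p2 E0.
have E1 : (t' \o t) \o p1 = H \o (s' \o p2).
  apply: fext => x /=; papp E0 x.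
  by papp (pb_comm HR) (p2 x).
have [w [[H1 H2] Hw]] := HO P _ _ E1.
have Hs : s \o w = p2.
  apply: (pb_uniq HR).
    apply: fext => x /=; papp Hc (w x); pappr E0 x.
    by papp H1 x.
  by apply: fext => x /=; exact: (eqapp H2 x).
exists w; split=> // w' [H1' H2']; apply: Hw; split=> //.
by rewrite -H2'.
Qed.

Lemma pb_exists m n p (g : 'I_m -> 'I_p) (l : 'I_n -> 'I_p) :
  exists K (F : 'I_K -> 'I_n) (k : 'I_K -> 'I_m), isPullback F g k l.
Proof.
pose A := [set x : 'I_n * 'I_m | l x.1 == g x.2].
exists #|A|, (fun i => (enum_val i).1), (fun i => (enum_val i).2).
split.
  apply: fext => i /=; have := enum_valP i; rewrite inE => /eqP ->. by [].
move=> P p1 p2 E.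
have Hm : forall x, (p1 x, p2 x) \in A.
  by move=> x; rewrite inE /=; apply/eqP; exact: (eqapp E x).
exists (fun x => enum_rank_in (Hm x) (p1 x, p2 x)).
split.
  split; apply: fext => x /=; by rewrite enum_rankK_in.
move=> w [H1 H2]; apply: fext => x.
apply: enum_val_inj; rewrite enum_rankK_in //.
by rewrite -(eqapp H1 x) -(eqapp H2 x) /=; case: (enum_val _).
Qed.

End SetPB.


Section Basic.
Variables (D : DblCatData) (HD : DblCatLaws D) (M : MultiData D) (HM : IsSymMulti M)
  (C : CartData M) (HC : IsCartesian C).

Lemma tight_uniq A B (t1 t2 : th A B) : M0a M t1 = M0a M t2 -> t1 = t2.
Proof.
move=> E.
have [p [_ Hp]] := m0_dfib HM (M0a M t1).
have E1 := Hp (existT _ A t1) (ex_intro _ erefl (esym (castf_id _))).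
have E2 : p = existT _ A t2.
  by apply: Hp; exists erefl; rewrite castf_id E.
have EE : existT (fun X => th X B) A t1 = existT _ A t2 by rewrite -E1 -E2.
exact: sig_inj EE.
Qed.

Lemma tfact A B Y (p : th A Y) (q : th B Y) (s : 'I_(M0o M A) -> 'I_(M0o M B)) :
  M0a M q \o s = M0a M p -> exists j : th A B, M0a M j = s /\ tcomp q j = p.
Proof.
move=> E.
have [[X j0] [[e Hj0] _]] := m0_dfib HM s.
simpl in e, Hj0.
have [pp [_ Hu]] := m0_dfib HM (M0a M p).
have E1 : pp = existT _ X (tcomp q j0).
  apply: Hu; exists e; rewrite (m0_comp HM) Hj0; apply: fext => i /=.
  rewrite /castf !cast_ord_id. by papp E (cast_ord e i).
have E2 : pp = existT _ A p.
  by apply: Hu; exists erefl; rewrite castf_id.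
have EE : existT (fun X => th X Y) X (tcomp q j0) = existT _ A p by rewrite -E1 -E2.
have eX := f_equal (@projT1 _ _) EE; simpl in eX; subst X.
have Eq2 := sig_inj EE.
rewrite (eq_irrelevance e erefl) castf_id in Hj0.
by exists j0.
Qed.

Lemma tlift Y n (phi : 'I_n -> 'I_(M0o M Y)) :
  exists X (t : th X Y) (e : M0o M X = n), M0a M t = castf e erefl phi.
Proof.
by have [[X t] [[e Ht] _]] := m0_dfib HM phi; exists X, t, e.
Qed.

Lemma tlift' Y Z (phi : 'I_(M0o M Z) -> 'I_(M0o M Y)) :
  exists X (t : th X Y) (i : 'I_(M0o M X) -> 'I_(M0o M Z)) i',
    [/\ cancel i i', cancel i' i & M0a M t = phi \o i].
Proof.
have [X [t [e Ht]]] := tlift phi.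
exists X, t, (cast_ord e), (cast_ord (esym e)); split.
- by move=> x; rewrite cast_ordK.
- by move=> x; rewrite cast_ordKV.
- by rewrite Ht; apply: fext => x; rewrite /castf cast_ord_id.
Qed.

Lemma creindex A B Cc E (g : lo Cc E) (k : th A Cc) (l : th B E)
  (F : 'I_(M0o M A) -> 'I_(M0o M B)) :
  isPullback F (Ml M g) (M0a M k) (M0a M l) ->
  exists (f : lo A B) (c : cell f g k l), Ml M f = F.
Proof.
move=> Hpb.
have [[[A' B' f'] [k' [l' c']]] [[e1 [e2 [H1 H2 H3]]] _]] := m1_dfib HM Hpb.
simpl in *.
have EA : existT (fun X => th X Cc) A' k' = existT _ A k.
  have [pp [_ Hu]] := m0_dfib HM (M0a M k).
  rewrite -(Hu (existT _ A' k')); last by exists e1.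
  by apply: Hu; exists erefl; rewrite castf_id.
have eA := f_equal (@projT1 _ _) EA; simpl in eA; subst A'.
have ek := sig_inj EA; subst k'.
have EB : existT (fun X => th X E) B' l' = existT _ B l.
  have [pp [_ Hu]] := m0_dfib HM (M0a M l).
  rewrite -(Hu (existT _ B' l')); last by exists e2.
  by apply: Hu; exists erefl; rewrite castf_id.
have eB := f_equal (@projT1 _ _) EB; simpl in eB; subst B'.
have el := sig_inj EB; subst l'.
rewrite (eq_irrelevance e1 erefl) (eq_irrelevance e2 erefl) castf_id in H1.
by exists f', c'.
Qed.

Lemma cell_sig_uniq A B Cc E (f f' : lo A B) (g : lo Cc E) k l
  (c : cell f g k l) (c' : cell f' g k l) :
  Ml M f = Ml M f' -> existT (fun f => cell f g k l) f c = existT _ f' c'.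
Proof.
move=> Ef.
have Hpb := m_cell HM c.
have [pp [_ Hu]] := m1_dfib HM Hpb.
have E1 : pp = existT (fun x => hom1 x (MkLA g)) (MkLA f) (existT _ k (existT _ l c)).
  by apply: Hu; exists erefl, erefl; split; rewrite /= castf_id.
have E2 : pp = existT (fun x => hom1 x (MkLA g)) (MkLA f') (existT _ k (existT _ l c')).
  by apply: Hu; exists erefl, erefl; split; rewrite /= ?castf_id.
have EE := etrans (esym E1) E2.
have ef := f_equal (@projT1 _ _) EE; simpl in ef.
injection ef => ef1; have ef2 := sig_inj (sig_inj ef1); subst f'.
have E3 := sig_inj EE.
have E4 := sig_inj E3.
have E5 := sig_inj E4.
by rewrite E5.
Qed.

Lemma cell_uniq_left A B Cc E (f f' : lo A B) (g : lo Cc E) k l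
  (c : cell f g k l) (c' : cell f' g k l) : Ml M f = Ml M f' -> f = f'.
Proof. by move=> Ef; have := f_equal (@projT1 _ _) (cell_sig_uniq c c' Ef). Qed.

Definition cell_tr (A B Cc E : ob D) (f f' : lo A B) (g g' : lo Cc E) k k' l l' :
  f = f' -> g = g' -> k = k' -> l = l' -> cell f g k l -> cell f' g' k' l'.
Proof. by move=> -> -> -> ->. Defined.

Lemma push_ext X Y Z (a a' : lo X Z) (f f' : th X Y) h h'
  (H : h \o M0a M f = Ml M a) (H' : h' \o M0a M f' = Ml M a') :
  a = a' -> f = f' -> h = h' -> push C H = push C H'.
Proof. by move=> ea ef eh; subst; rewrite (proof_irrelevance _ H H'). Qed.

Lemma LCB W R Z (gam : lo W Z) (rho : lo R Z) (j : th W R)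
  (c : cell gam rho j (tid Z)) (H : Ml M rho \o M0a M j = Ml M gam) :
  rho = push C H.
Proof.
have Hh : Ml M rho \o M0a M (tid R) = Ml M rho by rewrite (m0_id HM).
have EU := cart_U HC Hh.
have c2 : cell rho (push C Hh) (tid R) (tid Z) by rewrite EU; exact: cid rho.
exact: (cart_BC HC c c2 (f':=j) erefl H).
Qed.

Lemma CF A0 B0 A B Cc E (f0 : lo A0 B0) (f : lo A B) (a : lo Cc E)
  (k0 : th A0 Cc) (l0 : th B0 E) (k : th A Cc) (l : th B E)
  (c0 : cell f0 a k0 l0) (c : cell f a k l) (j : th A0 A) (m : th B0 B) :
  tcomp k j = k0 -> tcomp l m = l0 ->
  Ml M f \o M0a M j = M0a M m \o Ml M f0 ->
  exists c' : cell f0 f j m, True.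
Proof.
move=> Ek El Ec.
have Hpb : isPullback (Ml M f0) (Ml M f) (M0a M j) (M0a M m).
  apply: (pb_cancel Ec (m_cell HM c)).
  rewrite -(m0_comp HM) -(m0_comp HM) Ek El. exact: (m_cell HM c0).
have [f' [c' Ef']] := creindex Hpb.
have c'' := ccomp c c'.
rewrite Ek El in c''.
have ef := cell_uniq_left c'' c0 Ef'. subst f'.
by exists c'.
Qed.

End Basic.


Section Core.
Variables (D : DblCatData) (HD : DblCatLaws D) (M : MultiData D) (HM : IsSymMulti M)
  (C : CartData M) (HC : IsCartesian C).

Lemma tailE U X Y Z (a : lo U Y) (f : th U X) m (Hm : m \o M0a M f = Ml M a)
  (b : lo Y Z) m' (H : m' \o M0a M f = Ml M (lcomp b a)) :
  m' = Ml M b \o m -> push C H = lcomp b (push C Hm).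
Proof.
move=> Em.
have H1 : (Ml M b \o m) \o M0a M f = Ml M (lcomp b a) by rewrite -Em.
rewrite -(cart_tail HC Hm H1); exact: push_ext.
Qed.

Lemma functE X Y W Z (a : lo X Z) (g : th X Y) (f : th Y W) h' h
  (H1 : h' \o M0a M g = Ml M a) (H3 : h \o M0a M f = Ml M (push C H1))
  (t : th X W) (H4 : h \o M0a M t = Ml M a) :
  h \o M0a M f = h' -> t = tcomp f g -> push C H3 = push C H4.
Proof.
move=> E Et; subst t.
exact: (cart_funct HC E H3 H4).
Qed.

Lemma frobE W V X Y Z (gam : lo W V) (a : lo X Y) (k : th W X) (g : th V Y)
  (c : cell gam a k g) (b : lo V Z) m (Hm : m \o M0a M g = Ml M b)
  h1 (H1 : h1 \o M0a M k = Ml M (lcomp b gam)) :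
  h1 = m \o Ml M a -> push C H1 = lcomp (push C Hm) a.
Proof.
move=> E.
have H1' : (m \o Ml M a) \o M0a M k = Ml M (lcomp b gam) by rewrite -E.
rewrite -(cart_frob HC c Hm H1'); exact: push_ext.
Qed.

Lemma UE X Z (a : lo X Z) (t : th X X) h (H : h \o M0a M t = Ml M a) :
  t = tid X -> push C H = a.
Proof.
move=> Et; subst t.
have Eh : h = Ml M a by rewrite -H (m0_id HM).
have H' : Ml M a \o M0a M (tid X) = Ml M a by rewrite (m0_id HM).
rewrite -{2}(cart_U HC H'); exact: push_ext.
Qed.

Lemma push_over' X Y Z (a : lo X Z) (f : th X Y) h (H : h \o M0a M f = Ml M a) :
  Ml M (push C H) = h.
Proof. exact: (push_over HC H). Qed.

Definition ii_all X Y Q (a : lo X Y) (ft : th Q Y) (pi : lo Q X) : Prop :=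
  forall R (ht : th R X) (fu : lo R Q) (c : cell fu a ht ft) (Dl : th X R),
    tcomp ht Dl = tid X ->
    forall H : (Ml M pi \o Ml M fu) \o M0a M Dl = Ml M (lid X),
      push C H = lcomp pi fu.

Definition AOC X Y (a : lo X Y) : Prop :=
  exists Q (ft : th Q Y) (pi : lo Q X) (i : 'I_(M0o M X) -> 'I_(M0o M Q)),
   [/\ cancel (Ml M pi) i, cancel i (Ml M pi), M0a M ft = Ml M a \o Ml M pi,
       (forall H : id \o M0a M ft = Ml M (lcomp a pi), push C H = lid Y)
     & ii_all a ft pi].

Lemma instance_exists X Y Q (a : lo X Y) (ft : th Q Y) (pi : lo Q X) i :
  cancel (Ml M pi) i -> cancel i (Ml M pi) -> M0a M ft = Ml M a \o Ml M pi ->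
  exists R (ht : th R X) (fu : lo R Q) (c : cell fu a ht ft) (Dl : th X R),
    tcomp ht Dl = tid X /\ (Ml M pi \o Ml M fu) \o M0a M Dl = Ml M (lid X).
Proof.
move=> pii ipi Eft.
have [K [F [k Hpb]]] := pb_exists (Ml M a) (M0a M ft).
have [R [ht [e Hht]]] := tlift HM k.
subst K; rewrite castf_id in Hht.
rewrite -Hht in Hpb.
have [fu [c Efu]] := creindex HM Hpb.
have Ed : M0a M ft \o i = Ml M a \o id.
  by apply: fext => x /=; rewrite Eft /= ipi.
have [d [Ed1 Ed2]] := pb_ex Hpb Ed.
have Ed3 : M0a M ht \o d = M0a M (tid X) by rewrite Ed2 (m0_id HM).
have [Dl [EDl1 EDl2]] := tfact HM Ed3.
exists R, ht, fu, c, Dl; split=> //.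
rewrite (ml_id HM) Efu EDl1; apply: fext => x /=.
by papp Ed1 x; rewrite ipi.
Qed.

Lemma KEY X Y Q (a : lo X Y) (ft : th Q Y) (pi : lo Q X)
  R0 (ht0 : th R0 X) (fu0 : lo R0 Q) (c0 : cell fu0 a ht0 ft) (Dl0 : th X R0)
  (E0 : tcomp ht0 Dl0 = tid X)
  (H0 : (Ml M pi \o Ml M fu0) \o M0a M Dl0 = Ml M (lid X))
  (P0 : push C H0 = lcomp pi fu0)
  Z (w : lo X Z) g (H : g \o M0a M ft = Ml M (lcomp w pi)) :
  g \o Ml M a = Ml M w -> lcomp (push C H) a = w.
Proof.
move=> Eg.
have Hc0 := pb_comm (m_cell HM c0).
have H1 : (g \o Ml M a) \o M0a M ht0 = Ml M (lcomp (lcomp w pi) fu0).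
  rewrite !(ml_comp HM); apply: fext => x /=.
  papp Hc0 x; by papp H (Ml M fu0 x); rewrite (ml_comp HM).
rewrite -(frobE c0 H H1) //.
have H2 : (Ml M w \o (Ml M pi \o Ml M fu0)) \o M0a M Dl0 = Ml M (lcomp w (lid X)).
  by rewrite (ml_comp HM) -H0.
have T := tailE H0 H2 erefl.
rewrite P0 (lcompA HD) in T.
have H3 : (g \o Ml M a) \o M0a M ht0 = Ml M (push C H2).
  by rewrite T.
have -> : push C H1 = push C H3 by apply: push_ext.
have H4 : (g \o Ml M a) \o M0a M (tcomp ht0 Dl0) = Ml M (lcomp w (lid X)).
  by rewrite E0 (m0_id HM) (lcomp1r HD) Eg.
rewrite (functE H3 H4) //.
  by rewrite (UE H4) ?(lcomp1r HD).
apply: fext => x /=.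
papp Hc0 x; by papp H (Ml M fu0 x); rewrite (ml_comp HM).
Qed.

Lemma GII X Y Q (a : lo X Y) (ft : th Q Y) (pi : lo Q X) i :
  cancel (Ml M pi) i -> cancel i (Ml M pi) ->
  forall R0 (ht0 : th R0 X) (fu0 : lo R0 Q) (c0 : cell fu0 a ht0 ft) (Dl0 : th X R0),
  tcomp ht0 Dl0 = tid X ->
  forall H0 : (Ml M pi \o Ml M fu0) \o M0a M Dl0 = Ml M (lid X),
  push C H0 = lcomp pi fu0 -> ii_all a ft pi.
Proof.
move=> pii ipi R0 ht0 fu0 c0 Dl0 E0 H0 P0 R ht fu c Dl E H.
have Hc := m_cell HM c.
have Ecm : M0a M ft \o Ml M fu0 = Ml M a \o M0a M ht0 by rewrite (pb_comm (m_cell HM c0)).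
have [s [Es1 Es2]] := pb_ex Hc Ecm.
have [j [Ej1 Ej2]] := tfact HM Es2.
have Ecf : Ml M fu \o M0a M j = M0a M (tid Q) \o Ml M fu0 by rewrite Ej1 Es1 (m0_id HM).
have [c' _] := CF HM c0 c Ej2 (tcomp1r HD ft) Ecf.
have Hj : Ml M fu \o M0a M j = Ml M fu0 by rewrite Ej1 Es1.
have Efu := LCB HM HC c' Hj.
have H1 : (Ml M pi \o Ml M fu) \o M0a M j = Ml M (lcomp pi fu0).
  by rewrite (ml_comp HM) -Hj.
have -> : lcomp pi fu = push C H1 by rewrite (tailE Hj H1 erefl) -Efu.
have H3 : (Ml M pi \o Ml M fu) \o M0a M j = Ml M (push C H0) by rewrite P0.
have -> : push C H1 = push C H3 by apply: push_ext.
have EDl : Dl = tcomp j Dl0.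
  apply: (tight_uniq HM); rewrite (m0_comp HM) Ej1.
  have HH := H; rewrite (ml_id HM) in HH.
  have HH0 := H0; rewrite (ml_id HM) in HH0.
  apply: (pb_uniq Hc); apply: fext => x /=.
  - have e1 := eqapp HH x; have e2 := eqapp HH0 x; simpl in e1, e2.
    papp Es1 (M0a M Dl0 x).
    by rewrite -(pii (Ml M fu (M0a M Dl x))) e1 -(pii (Ml M fu0 (M0a M Dl0 x))) e2.
  - have e1 := eqapp (f_equal (M0a M) E) x; rewrite !(m0_comp HM) (m0_id HM) /= in e1.
    have e2 := eqapp (f_equal (M0a M) E0) x; rewrite !(m0_comp HM) (m0_id HM) /= in e2.
    by rewrite e1; papp Es2 (M0a M Dl0 x).
symmetry; apply: (functE H3 H) => //.
by rewrite -Hj.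
Qed.

Lemma AOC_opcart X Y (a : lo X Y) : AOC a -> opcartesian M a.
Proof.
move=> [Q [ft [pi [i [pii ipi Eft Hi Hii]]]]].
have [R0 [ht0 [fu0 [c0 [Dl0 [E0 H0]]]]]] := instance_exists pii ipi Eft.
have P0 := Hii R0 ht0 fu0 c0 Dl0 E0 H0.
move=> Z w g Eg.
have H : g \o M0a M ft = Ml M (lcomp w pi).
  by rewrite Eft (ml_comp HM) -Eg.
exists (push C H); split.
  split; first exact: push_over'.
  exact: (KEY c0 E0 P0 H Eg).
move=> v [Ev1 Ev2].
have Hv : id \o M0a M ft = Ml M (lcomp a pi) by rewrite Eft (ml_comp HM).
have H' : Ml M v \o M0a M ft = Ml M (lcomp v (lcomp a pi)).
  by rewrite Eft !(ml_comp HM).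
have T := tailE Hv H' erefl.
rewrite Hi (lcomp1r HD) in T.
rewrite -{1}T; apply: push_ext => //.
by rewrite (lcompA HD) Ev2.
Qed.

Lemma CORE X P Q (a : lo X P) (ft : th Q P) (pi : lo Q X) i :
  cancel (Ml M pi) i -> cancel i (Ml M pi) -> M0a M ft = Ml M a \o Ml M pi ->
  ii_all a ft pi ->
  forall R Q' (u' : th R Q') (rho : lo R X) (t' : lo R Q) (t : lo Q' P)
    (c : cell t' t u' ft),
  Ml M pi \o Ml M t' = Ml M rho ->
  forall H : Ml M t \o M0a M u' = Ml M (lcomp a rho), t = push C H ->
  lcomp pi t' = rho.
Proof.
move=> pii ipi Eft Hii R Q' u' rho t' t c Et' H Et.
have [R0 [ht0 [fu0 [c0 [Dl0 [E0 H0]]]]]] := instance_exists pii ipi Eft.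
have P0 := Hii R0 ht0 fu0 c0 Dl0 E0 H0.
have HH0 := H0; rewrite (ml_id HM) in HH0.
have E0' := f_equal (M0a M) E0; rewrite (m0_comp HM) (m0_id HM) in E0'.
have [K1 [F1 [k1 Hpb1]]] := pb_exists (Ml M rho) (M0a M ht0).
have [X' [x [e Hx]]] := tlift HM k1.
subst K1; rewrite castf_id in Hx; rewrite -Hx in Hpb1.
have [r2 [c1 Er2]] := creindex HM Hpb1.
have c1' := clcomp c0 c1.
have Hc := m_cell HM c.
have Ec0 := pb_comm (m_cell HM c0).
have Ec1 := pb_comm (m_cell HM c1).
have Es : M0a M ft \o (Ml M fu0 \o Ml M r2) = Ml M t \o (M0a M u' \o M0a M x).
  apply: fext => y /=.
  pappr Ec0 (Ml M r2 y); pappr Ec1 y; papp H (M0a M x y).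
  by rewrite (ml_comp HM).
have [s [Es1 Es2]] := pb_ex Hc Es.
have Es2' : M0a M u' \o s = M0a M (tcomp u' x) by rewrite (m0_comp HM).
have [f2 [Ef21 Ef22]] := tfact HM Es2'.
have c2 : cell t' (push C H) u' ft by rewrite -Et.
have Hb : Ml M t' \o M0a M f2 = Ml M (lcomp fu0 r2) by rewrite Ef21 Es1 (ml_comp HM).
have Ebc := cart_BC HC c1' c2 Ef22 Hb.
have Hc3 : (Ml M pi \o Ml M t') \o M0a M f2 = Ml M (lcomp pi (lcomp fu0 r2)).
  by rewrite (ml_comp HM) -Hb.
have -> : lcomp pi t' = push C Hc3 by rewrite (tailE Hb Hc3 erefl) -Ebc.
have [K2 [F2 [k2 Hpb2]]] := pb_exists (Ml M r2) (M0a M Dl0).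
have [W [kk [e2 Hkk]]] := tlift HM k2.
subst K2; rewrite castf_id in Hkk; rewrite -Hkk in Hpb2.
have [gam [c3 Egam]] := creindex HM Hpb2.
have Ec3 := pb_comm (m_cell HM c3).
have H1' : ((Ml M pi \o Ml M fu0) \o Ml M r2) \o M0a M kk = Ml M (lcomp (lid X) gam).
  apply: fext => w /=.
  papp Ec3 w; have := eqapp HH0 (Ml M gam w) => /= ->.
  by rewrite (ml_comp HM) (ml_id HM).
have Fr := frobE c3 H0 H1' erefl.
have Hc4 : (Ml M pi \o Ml M t') \o M0a M f2 = Ml M (push C H1').
  by rewrite Fr P0 -(lcompA HD) -Hc3.
have -> : push C Hc3 = push C Hc4 by apply: push_ext => //; rewrite Fr P0 (lcompA HD).
have cc := ccomp c1 c3.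
rewrite E0 in cc.
have Hl : Ml M rho \o M0a M (tcomp x kk) = Ml M gam.
  rewrite (m0_comp HM); apply: fext => w /=.
  papp (pb_comm Hpb1) (M0a M kk w).
  have := eqapp Ec3 w; rewrite /= Er2 => ->.
  by have := eqapp E0' (Ml M gam w).
have Erho := LCB HM HC cc Hl.
have H4 : (Ml M pi \o Ml M t') \o M0a M (tcomp x kk) = Ml M (lcomp (lid X) gam).
  by rewrite (lcomp1l HD) Et'.
have Exk : tcomp x kk = tcomp f2 kk.
  apply: (tight_uniq HM); rewrite !(m0_comp HM) Ef21.
  apply: (pb_uniq Hc); apply: fext => w /=.
  - papp Es1 (M0a M kk w).
    rewrite -(pii (Ml M t' (M0a M x (M0a M kk w)))) -(pii (Ml M fu0 (Ml M r2 (M0a M kk w)))).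
    congr i.
    have := eqapp Et' (M0a M x (M0a M kk w)) => /= ->.
    papp (pb_comm Hpb1) (M0a M kk w).
    have := eqapp Ec3 w; rewrite /= Er2 => ->.
    have := eqapp HH0 (Ml M gam w) => /= ->.
    by have := eqapp E0' (Ml M gam w).
  - by papp Es2 (M0a M kk w).
rewrite (functE Hc4 H4) //.
  rewrite {1}Erho; apply: push_ext => //.
  exact: (lcomp1l HD).
rewrite Ef21; apply: fext => y /=. by papp Es1 y.
Qed.

Lemma opcart_AOC X Y P (a : lo X Y) (b : lo X P)
  (beta : 'I_(M0o M P) -> 'I_(M0o M Y)) beta' :
  cancel beta beta' -> cancel beta' beta -> beta \o Ml M b = Ml M a ->
  opcartesian M a -> AOC b -> AOC a.
Proof.
move=> bK bK' Eb oa [Qb [ftb [pib [ib [pii ipi Eft Hi Hii]]]]].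
have ob : opcartesian M b by apply: AOC_opcart; exists Qb, ftb, pib, ib.
have [v [[Ev1 Ev2] _]] := ob Y a beta Eb.
have Eb' : beta' \o Ml M a = Ml M b by rewrite -Eb; apply: fext => x /=; rewrite bK.
have [v' [[Ev1' Ev2'] _]] := oa P b beta' Eb'.
have Evv : lcomp v v' = lid Y.
  have E1 : id \o Ml M a = Ml M a by [].
  have [u0 [_ Hu0]] := oa Y a id E1.
  rewrite -(Hu0 (lcomp v v')) ?(Hu0 (lid Y)) //; split.
  - by rewrite (ml_id HM).
  - by rewrite (lcomp1l HD).
  - by rewrite (ml_comp HM) Ev1 Ev1'; apply: fext => x /=; rewrite bK'.
  - by rewrite -(lcompA HD) Ev2' Ev2.
have [Qa [fta [iq [iq' [iqK iqK' Efta]]]]] := tlift' HM (beta \o M0a M ftb).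
have Hpb : isPullback iq (Ml M v') (M0a M fta) (M0a M ftb).
  apply: (pb_bij iqK iqK' (g' := beta)).
    by rewrite Ev1'.
  rewrite Ev1' Efta; apply: fext => x /=; by rewrite bK.
have [v2 [c2 Ev2i]] := creindex HM Hpb.
exists Qa, fta, (lcomp pib v2), (iq' \o ib); split.
- by move=> x; rewrite (ml_comp HM) Ev2i /= pii iqK.
- by move=> x; rewrite (ml_comp HM) Ev2i /= iqK' ipi.
- rewrite Efta (ml_comp HM) Ev2i Eft -Eb; by apply: fext.
- move=> H.
  have Hm : beta \o M0a M ftb = Ml M (lcomp v (lcomp b pib)).
    by rewrite Eft !(ml_comp HM) Ev1.
  have H1 : id \o M0a M fta = Ml M (lcomp (lcomp v (lcomp b pib)) v2).
    by rewrite Efta !(ml_comp HM) Ev1 Ev2i Eft.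
  have Fr := frobE c2 Hm H1.
  rewrite Ev1' in Fr.
  have Hi0 : id \o M0a M ftb = Ml M (lcomp b pib) by rewrite Eft (ml_comp HM).
  have T := tailE Hi0 Hm.
  rewrite Ev1 Hi (lcomp1r HD) in T.
  rewrite T // in Fr.
  rewrite -Evv -Fr; last by apply: fext => x /=; rewrite bK'.
  by apply: push_ext => //; rewrite -Ev2 !(lcompA HD).
- move=> R ht fu c Dl E H.
  have cc := clcomp c2 c.
  rewrite Ev2' in cc.
  have H' : (Ml M pib \o Ml M (lcomp v2 fu)) \o M0a M Dl = Ml M (lid X).
    by rewrite -H !(ml_comp HM).
  rewrite -(lcompA HD) -(Hii R ht _ cc Dl E H').
  by apply: push_ext => //; rewrite !(ml_comp HM).
Qed.

Lemma AOC_cell A B Cc E (f0 : lo A B) (a : lo Cc E) k l (c : cell f0 a k l) :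
  AOC a -> AOC f0.
Proof.
move=> [Qe [fte [pia [ia [pii ipi Eft Hi Hii]]]]].
have Ec := pb_comm (m_cell HM c).
have [Qb [ftb [iB [iB' [iBK iBK' Eftb]]]]] := tlift' HM (Ml M f0).
have Es : M0a M fte \o (ia \o M0a M k \o iB) = M0a M (tcomp l ftb).
  rewrite (m0_comp HM) Eftb Eft; apply: fext => x /=.
  by rewrite ipi; papp Ec (iB x).
have [kap [Ekap1 Ekap2]] := tfact HM Es.
have Hpb : isPullback iB (Ml M pia) (M0a M kap) (M0a M k).
  apply: (pb_bij iBK iBK' pii).
  by rewrite Ekap1; apply: fext => x /=; rewrite ipi.
have [pb [cp Epb]] := creindex HM Hpb.
exists Qb, ftb, pb, iB'; split.
- by rewrite Epb.
- by rewrite Epb.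
- by rewrite Eftb Epb.
- move=> H.
  have Hi0 : id \o M0a M fte = Ml M (lcomp a pia) by rewrite Eft (ml_comp HM).
  have c2 : cell (lid B) (push C Hi0) l l by rewrite Hi; exact: clid l.
  have Hbc : Ml M (lid B) \o M0a M ftb = Ml M (lcomp f0 pb).
    by rewrite (ml_id HM) H.
  rewrite (cart_BC HC (clcomp c cp) c2 (esym Ekap2) Hbc).
  by apply: push_ext => //; rewrite (ml_id HM).
have [Re [hte [fue [ce [Dle [Ee He]]]]]] := instance_exists pii ipi Eft.
have Pe := Hii Re hte fue ce Dle Ee He.
have HHe := He; rewrite (ml_id HM) in HHe.
have Ee' := f_equal (M0a M) Ee; rewrite (m0_comp HM) (m0_id HM) in Ee'.
have [KB [FB [kB HpbB]]] := pb_exists (Ml M fue) (M0a M kap).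
have [RB [mu [e Hmu]]] := tlift HM kB.
subst KB; rewrite castf_id in Hmu; rewrite -Hmu in HpbB.
have [fuB [cB' EfuB]] := creindex HM HpbB.
have EcB' := pb_comm (m_cell HM cB').
have Ece := pb_comm (m_cell HM ce).
have Ekap2' := f_equal (M0a M) Ekap2; rewrite !(m0_comp HM) in Ekap2'.
have Esj : M0a M l \o (M0a M ftb \o Ml M fuB) = Ml M a \o (M0a M hte \o M0a M mu).
  apply: fext => y /=.
  pappr Ekap2' (Ml M fuB y); pappr EcB' y; by papp Ece (M0a M mu y).
have [sj [Esj1 Esj2]] := pb_ex (m_cell HM c) Esj.
have Esj2' : M0a M k \o sj = M0a M (tcomp hte mu) by rewrite (m0_comp HM).
have [htB [EhtB1 EhtB2]] := tfact HM Esj2'.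
have Ecf : Ml M f0 \o M0a M htB = M0a M ftb \o Ml M fuB by rewrite EhtB1 Esj1.
have [cB _] := CF HM (ccomp ce cB') c EhtB2 (esym Ekap2) Ecf.
have EsD : M0a M kap \o iB' = Ml M fue \o (M0a M Dle \o M0a M k).
  rewrite Ekap1; apply: fext => x /=; rewrite iBK'.
  by rewrite -(pii (Ml M fue (M0a M Dle (M0a M k x)))); congr ia; have := eqapp HHe (M0a M k x).
have [sD [EsD1 EsD2]] := pb_ex (m_cell HM cB') EsD.
have EsD2' : M0a M mu \o sD = M0a M (tcomp Dle k) by rewrite (m0_comp HM).
have [DlB [EDlB1 EDlB2]] := tfact HM EsD2'.
have EB : tcomp htB DlB = tid A.
  apply: (tight_uniq HM); rewrite (m0_comp HM) (m0_id HM) EhtB1 EDlB1.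
  apply: (pb_uniq (m_cell HM c)); apply: fext => x /=.
  - papp Esj1 (sD x); papp EsD1 x; by rewrite Eftb /= iBK'.
  - papp Esj2 (sD x); papp EsD2 x; by have := eqapp Ee' (M0a M k x).
have HB : (Ml M pb \o Ml M fuB) \o M0a M DlB = Ml M (lid A).
  rewrite (ml_id HM) EDlB1 Epb; apply: fext => x /=.
  by papp EsD1 x; rewrite iBK'.
have pbK : cancel (Ml M pb) iB' by rewrite Epb.
have pbK' : cancel iB' (Ml M pb) by rewrite Epb.
apply: (GII pbK pbK' cB EB (H0 := HB)).
have c2 : cell (lcomp pb fuB) (push C He) mu k by rewrite Pe; exact: clcomp cp cB'.
have H' : Ml M (lcomp pb fuB) \o M0a M DlB = Ml M (lid A) by rewrite (ml_comp HM).
rewrite {1}(cart_BC HC (clid k) c2 EDlB2 H').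
by apply: push_ext => //; rewrite (ml_comp HM).
Qed.

End Core.


Section Main.
Variables (D : DblCatData) (HD : DblCatLaws D) (M : MultiData D) (HM : IsSymMulti M)
  (C : CartData M) (HC : IsCartesian C).

Lemma alg_data X J (f : 'I_(M0o M X) -> 'I_J) P Q (eP : M0o M P = J)
  (eQ : M0o M Q = M0o M X) ft pi u :
  alg_product C f eP eQ ft pi u ->
  exists i, [/\ cancel (Ml M pi) i, cancel i (Ml M pi),
     M0a M ft = Ml M u \o Ml M pi,
     (forall H : id \o M0a M ft = Ml M (lcomp u pi), push C H = lid P)
   & ii_all C u ft pi].
Proof.
move=> [E1 E2 E3 Hi Hii].
have pK : cancel (Ml M pi) (cast_ord (esym eQ)).
  by move=> x; apply: val_inj; rewrite E2.
have pK' : cancel (cast_ord (esym eQ)) (Ml M pi).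
  by move=> x; apply: val_inj; rewrite E2.
have Eft : M0a M ft = Ml M u \o Ml M pi.
  apply: fext => x; apply: val_inj; rewrite E1 E3 E2 /= /castf /=.
  by rewrite !cast_ord_id.
exists (cast_ord (esym eQ)); split=> //.
move=> R ht fu c Dl EDl H.
have Hc := m_cell HM c.
have Eu : Ml M u = cast_ord (esym eP) \o f.
  by rewrite E3; apply: fext => x; apply: val_inj; rewrite /= /castf /= cast_ord_id.
have Eft' : M0a M ft = cast_ord (esym eP) \o (f \o Ml M pi) by rewrite Eft Eu.
rewrite Eu Eft' in Hc.
have Hc2 := pb_postinj (@cast_ord_inj _ _ _) Hc.
have Hc3 : isPullback (Ml M pi \o Ml M fu) f (M0a M ht) f.
  exact: (pb_adj pK pK' Hc2).
have Efu : Ml M fu = castf erefl eQ (Ml M pi \o Ml M fu).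
  by apply: fext => x; apply: val_inj; rewrite /castf /= cast_ord_id -{1}(pK (Ml M fu x)).
have HH := H; rewrite (ml_id HM) in HH.
have Ed1 : (Ml M pi \o Ml M fu) \o M0a M Dl = id by [].
have Ed2 : M0a M ht \o M0a M Dl = id by rewrite -(m0_comp HM) EDl (m0_id HM).
have H' : castf erefl erefl (Ml M pi \o Ml M fu) \o M0a M Dl = Ml M (lid X).
  by rewrite castf_id.
rewrite -(Hii (M0o M R) _ _ Hc3 R erefl ht (esym (castf_id _)) fu c Efu
  (M0a M Dl) Ed1 Ed2 Dl (esym (castf_id _)) H').
by apply: push_ext => //; rewrite castf_id.
Qed.

Lemma alg_AOC X J (f : 'I_(M0o M X) -> 'I_J) P Q (eP : M0o M P = J)
  (eQ : M0o M Q = M0o M X) ft pi u :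
  alg_product C f eP eQ ft pi u -> AOC C u.
Proof.
move=> /alg_data [i [pK pK' Eft Hi Hii]].
by exists Q, ft, pi, i; split.
Qed.

Lemma aoc_alg X Q P (f : 'I_(M0o M X) -> 'I_(M0o M P)) (eQ : M0o M Q = M0o M X)
  (ft : th Q P) (pi : lo Q X) (u : lo X P) :
  M0a M ft = castf eQ erefl f -> Ml M pi = castf eQ erefl id ->
  Ml M u = f ->
  (forall H : id \o M0a M ft = Ml M (lcomp u pi), push C H = lid P) ->
  ii_all C u ft pi ->
  alg_product C f erefl eQ ft pi u.
Proof.
move=> E1 E2 E3 Hi Hii; split=> //.
  by rewrite castf_id.
move=> K l h Hpb R eR ht Eht fu c Efu d Ed1 Ed2 Dl EDl H.
subst K; rewrite castf_id in Eht; rewrite castf_id in EDl.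
have EE : tcomp ht Dl = tid X.
  by apply: (tight_uniq HM); rewrite (m0_comp HM) (m0_id HM) Eht EDl Ed2.
have H' : (Ml M pi \o Ml M fu) \o M0a M Dl = Ml M (lid X).
  rewrite (ml_id HM) E2 Efu EDl; apply: fext => x; apply: val_inj.
  by rewrite /castf /= cast_ord_id; have := eqapp Ed1 x => /= ->.
rewrite -(Hii R ht fu c Dl EE H').
apply: push_ext => //; rewrite E2 Efu castf_id; apply: fext => x; apply: val_inj.
by rewrite /castf /= cast_ord_id.
Qed.

Lemma AP_R : AP C -> representable M.
Proof.
move=> HAP; split.
  move=> X n f.
  have [P [Q [eP [eQ [ft [pi [u Halg]]]]]]] := HAP X n f.
  exists P, u, eP; split; first by case: Halg.
  exact: (AOC_opcart HD HM HC (alg_AOC Halg)).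
move=> A B Cc E f0 u0 k l c ou0.
have [P [Q [eP [eQ [ft [pi [u Halg]]]]]]] := HAP Cc (M0o M E) (Ml M u0).
have Au := alg_AOC Halg.
have Eb : cast_ord eP \o Ml M u = Ml M u0.
  case: Halg => _ _ E3 _ _; rewrite E3; apply: fext => x; apply: val_inj.
  by rewrite /castf /= cast_ord_id.
have bK : cancel (cast_ord eP) (cast_ord (esym eP)) by move=> x; rewrite cast_ordK.
have bK' : cancel (cast_ord (esym eP)) (cast_ord eP) by move=> x; rewrite cast_ordKV.
have Au0 := opcart_AOC HD HM HC bK bK' Eb ou0 Au.
exact: (AOC_opcart HD HM HC (AOC_cell HD HM HC c Au0)).
Qed.

Lemma R_AP : representable M -> AP C.
Proof.
move=> [Hop Hst] X J f.
have [Y [u [e [Eu ou]]]] := Hop X J f.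
subst J; rewrite castf_id in Eu.
have [Q [ft [eQ Eft]]] := tlift HM f.
have [K0 [l0 [h0 Hpb]]] := pb_exists (Ml M u) (M0a M ft).
have [R0 [ht0 [e0 Eht0]]] := tlift HM h0.
subst K0; rewrite castf_id in Eht0; rewrite -Eht0 in Hpb.
have [fu0 [c0 Efu0]] := creindex HM Hpb.
have ofu0 := Hst _ _ _ _ _ _ _ _ c0 ou.
pose ka := castf eQ erefl (@id 'I_(M0o M X)).
pose io := cast_ord (esym eQ).
have kaK : cancel ka io by move=> x; apply: val_inj; rewrite /ka /castf /=.
have kaK' : cancel io ka by move=> x; apply: val_inj; rewrite /ka /castf /=.
have Ed : M0a M ft \o io = Ml M u \o id.
  by rewrite Eft Eu; apply: fext => x; rewrite /= /castf /io /= cast_ord_id cast_ordKV.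
have [d [Ed1 Ed2]] := pb_ex Hpb Ed.
have Ed3 : M0a M ht0 \o d = M0a M (tid X) by rewrite Ed2 (m0_id HM).
have [Dl0 [EDl1 EDl2]] := tfact HM Ed3.
have H0 : (ka \o Ml M fu0) \o M0a M Dl0 = Ml M (lid X).
  rewrite (ml_id HM) EDl1 Efu0; apply: fext => x /=.
  by papp Ed1 x; rewrite kaK'.
have Eg : ka \o Ml M fu0 = Ml M (push C H0) by rewrite (push_over' HC).
have [pi [[Epi1 Epi2] _]] := ofu0 X (push C H0) ka Eg.
have piK : cancel (Ml M pi) io by rewrite Epi1.
have piK' : cancel io (Ml M pi) by rewrite Epi1.
have H0' : (Ml M pi \o Ml M fu0) \o M0a M Dl0 = Ml M (lid X) by rewrite Epi1.
have P0 : push C H0' = lcomp pi fu0.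
  by rewrite Epi2; apply: push_ext => //; rewrite Epi1.
have Hii := GII HD HM HC piK piK' c0 EDl2 P0.
exists Y, Q, erefl, eQ, ft, pi, u.
apply: aoc_alg => //.
move=> H.
have Eg2 : id \o Ml M u = Ml M u by [].
have [w [_ Hw]] := ou Y u id Eg2.
rewrite -(Hw (push C H)) ?(Hw (lid Y)) //; split.
- by rewrite (ml_id HM).
- by rewrite (lcomp1l HD).
- by rewrite (push_over' HC).
- exact: (KEY HD HM HC c0 EDl2 P0 H).
Qed.

Lemma UP_AP : UP M -> AP C.
Proof.
move=> HUP X J f.
have [P [Q [eP [eQ [ft [pi [E1 E2 U3]]]]]]] := HUP X J f.
subst J.
have [K0 [F0 [k0 Hpb]]] := pb_exists f f.
have [R0 [ht0 [e0 Eht0]]] := tlift HM F0.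
subst K0; rewrite castf_id in Eht0.
have Ed : f \o id = f \o id by [].
have [d [Ed1 Ed2]] := pb_ex Hpb Ed.
have Ed3 : M0a M ht0 \o d = M0a M (tid X) by rewrite Eht0 Ed1 (m0_id HM).
have [Dl0 [EDl1 EDl2]] := tfact HM Ed3.
have H0 : k0 \o M0a M Dl0 = Ml M (lid X) by rewrite EDl1 Ed2 (ml_id HM).
have Erho : Ml M (push C H0) = castf erefl erefl k0 by rewrite (push_over' HC) castf_id.
have Eht0' : M0a M ht0 = castf erefl erefl F0 by rewrite castf_id.
have [[fu0 [u c0]] [[Eu1 Erho0] _]] := U3 _ _ _ _ _ Hpb X R0 erefl erefl ht0 Eht0' _ Erho.
simpl in Eu1, Erho0.
rewrite castf_id in Eu1.
pose io := cast_ord (esym eQ).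
have piK : cancel (Ml M pi) io by move=> x; apply: val_inj; rewrite E2.
have piK' : cancel io (Ml M pi) by move=> x; apply: val_inj; rewrite E2.
have Eft : M0a M ft = Ml M u \o Ml M pi.
  rewrite E1 E2 Eu1; apply: fext => x; rewrite /castf /= !cast_ord_id.
  by congr (f _); apply: val_inj.
have E0 : tcomp ht0 Dl0 = tid X.
  by apply: (tight_uniq HM); rewrite (m0_comp HM) (m0_id HM) Eht0 EDl1 Ed1.
have H0' : (Ml M pi \o Ml M fu0) \o M0a M Dl0 = Ml M (lid X).
  by rewrite -(ml_comp HM) -Erho0 (push_over' HC).
have P0 : push C H0' = lcomp pi fu0.
  rewrite -Erho0; apply: push_ext => //.
  by rewrite -(ml_comp HM) -Erho0 (push_over' HC).
have Hii := GII HD HM HC piK piK' c0 E0 P0.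
exists P, Q, erefl, eQ, ft, pi, u.
apply: aoc_alg => //.
move=> H.
have Hpb2 : isPullback id (Ml M (push C H)) (M0a M ft) (M0a M ft).
  rewrite (push_over' HC); apply: (pb_bij (f' := id) (g' := id)) => //.
have [t' [c Et']] := creindex HM Hpb2.
have H1 : Ml M (push C H) \o M0a M ft = Ml M (lcomp u pi) by rewrite (push_over' HC).
have Et1 : push C H = push C H1 by apply: push_ext => //; rewrite (push_over' HC).
have Et2 : Ml M pi \o Ml M t' = Ml M pi by rewrite Et'.
have Crho := CORE HD HM HC piK piK' Eft Hii c Et2 Et1.
have Hpb3 : isPullback (M0a M ft) f (Ml M pi) id.
  apply: pb_transpose; apply: (pb_bij piK piK' (g' := id)) => //.
  rewrite Eft Eu1; by apply: fext.
have Eft2 : M0a M ft = castf erefl erefl (M0a M ft) by rewrite castf_id.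
have Epi2 : Ml M pi = castf erefl erefl (Ml M pi) by rewrite castf_id.
have [pp [_ Hu]] := U3 _ _ _ _ _ Hpb3 P Q erefl erefl ft Eft2 pi Epi2.
have Ep1 := Hu (existT _ t' (existT _ (push C H) c)).
have Ep2 := Hu (existT _ (lid Q) (existT _ (lid P) (clid ft))).
have EE : existT (fun t' => {t : lo P P & cell t' t ft ft}) t' (existT _ (push C H) c)
   = existT _ (lid Q) (existT _ (lid P) (clid ft)).
  rewrite -Ep1 ?Ep2 //=; split.
  - by rewrite (ml_id HM) castf_id.
  - by rewrite (lcomp1r HD).
  - by rewrite (push_over' HC) castf_id.
  - by rewrite Crho.
have := f_equal (fun p => projT1 (projT2 p)) EE.
by [].
Qed.

Lemma AP_UP : AP C -> UP M.
Proof.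
move=> HAP X J f.
have [P [Q [eP [eQ [ft [pi [u Halg]]]]]]] := HAP X J f.
subst J.
have [i [piK piK' Eft Hi Hii]] := alg_data Halg.
have [E1 E2 E3 _ _] := Halg.
exists P, Q, erefl, eQ, ft, pi; split => //.
move=> L K f' h' h Hpb Q' R eR eQ' u' Eu' rho Erho.
subst L K; rewrite castf_id in Eu'; rewrite castf_id in Erho.
have Eu3 : Ml M u = f by rewrite E3 castf_id.
have Ht : h \o M0a M u' = Ml M (lcomp u rho).
  rewrite Eu' (ml_comp HM) Eu3 Erho; apply: fext => x /=.
  by pappr (pb_comm Hpb) x.
have Hpb2 : isPullback (i \o h') (Ml M (push C Ht)) (M0a M u') (M0a M ft).
  rewrite (push_over' HC) Eu'; apply: (pb_adj piK' piK).
  have -> : M0a M ft \o i = f.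
    by rewrite Eft Eu3; apply: fext => x /=; rewrite piK'.
  exact: pb_transpose Hpb.
have [t' [c Et']] := creindex HM Hpb2.
have Et'' : Ml M pi \o Ml M t' = Ml M rho.
  by rewrite Et' Erho; apply: fext => x /=; rewrite piK'.
have Hq1 : Ml M (push C Ht) \o M0a M u' = Ml M (lcomp u rho) by rewrite (push_over' HC).
have Et1 : push C Ht = push C Hq1 by apply: push_ext => //; rewrite (push_over' HC).
have Crho := CORE HD HM HC piK piK' Eft Hii c Et'' Et1.
exists (existT _ t' (existT _ (push C Ht) c)); split.
  by split => /=; [rewrite (push_over' HC) castf_id | rewrite Crho].
move=> [t2' [t2 c2]] /= [Et2 Erho2].
rewrite castf_id in Et2.
have Ht2 : t2 = push C Ht.
  have Hm : id \o M0a M ft = Ml M (lcomp u pi) by rewrite Eft (ml_comp HM).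
  have H1 : Ml M t2 \o M0a M u' = Ml M (lcomp (lcomp u pi) t2').
    rewrite (ml_comp HM) (ml_comp HM) -Eft; exact: (pb_comm (m_cell HM c2)).
  have F := frobE HC c2 Hm H1 erefl.
  rewrite Hi (lcomp1l HD) in F.
  rewrite -F; apply: push_ext => //.
  by rewrite -(lcompA HD) -Erho2.
subst t2.
have Et2' : Ml M t' = Ml M t2'.
  rewrite Et'; apply: fext => x /=.
  by rewrite -Erho Erho2 (ml_comp HM) /= piK.
have EE := cell_sig_uniq HM c c2 Et2'.
have ef := f_equal (@projT1 _ _) EE; simpl in ef; subst t2'.
by rewrite (sig_inj EE).
Qed.

End Main.

Theorem main_thm (D : DblCatData) (HD : DblCatLaws D)
  (M : MultiData D) (HM : IsSymMulti M)
  (C : CartData M) (HC : IsCartesian C) :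
  (AP C <-> UP M) /\ (UP M <-> representable M).
Proof.
split; split.
- exact: AP_UP.
- exact: UP_AP.
- by move=> H; apply: (AP_R HD HM HC); apply: UP_AP.
- by move=> H; apply: (AP_UP HD HM HC); apply: R_AP.
Qed.



Theorem theorem4p22 (D : DblCatData) (HD : DblCatLaws D)
  (M : MultiData D) (HM : IsSymMulti M)
  (C : CartData M) (HC : IsCartesian C) :
  (AP C <-> UP M) /\ (UP M <-> representable M).
Proof. exact (main_thm HD HM HC). Qed.
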